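(* Let the sequence $(y_k)_{k\in\mathbb{N}}$ be defined by $y_1=2$ and $(2k-1)^2y_k=4(k-1)^2y_{k-1}+2$ for $k\ge2$. Then $$\frac{\ln k}{2k}<y_k\le\frac{\ln k+4}{2k}\qquad\text{for all } k\in\mathbb{N}.$$ *)

(* Defs.v *)
From Stdlib Require Import Reals.

(* Main.v *)
Require Import Defs.
From Stdlib Require Import Reals.
From Stdlib Require Import Lra Lia Psatz.
Open Scope R_scope.

Lemma ln_le_sub1 (x : R) : 0 < x -> ln x <= x - 1.
Proof. intro hx. pose proof (exp_ineq1_le (ln x)). rewrite exp_ln in H; lra. Qed.

Lemma ln_nonneg (a : R) : 1 <= a -> 0 <= ln a.
Proof. intro h. destruct (Req_dec a 1) as [->|n]. rewrite ln_1; lra.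
  rewrite <- ln_1. left. apply ln_increasing; lra. Qed.

Lemma ln_step (a : R) : 1 <= a ->
  1/(a+1) <= ln (a+1) - ln a <= 1/a.
Proof.
  intro ha.
  pose proof (ln_le_sub1 ((a+1)/a)) as H1.
  pose proof (ln_le_sub1 (a/(a+1))) as H2.
  assert (0 < a) by lra. assert (0 < a+1) by lra.
  assert (P1 : 0 < (a+1)/a) by (apply Rdiv_lt_0_compat; lra).
  assert (P2 : 0 < a/(a+1)) by (apply Rdiv_lt_0_compat; lra).
  assert (M1 : ln (a+1) = ln a + ln ((a+1)/a)).
  { rewrite <- ln_mult by lra. f_equal. field; lra. }
  assert (M2 : ln a = ln (a+1) + ln (a/(a+1))).
  { rewrite <- ln_mult by lra. f_equal. field; lra. }
  specialize (H1 P1). specialize (H2 P2).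
  assert (E1 : (a+1)/a - 1 = 1/a) by (field; lra).
  assert (E2 : a/(a+1) - 1 = -(1/(a+1))) by (field; lra).
  split.
  - rewrite E2 in H2. lra.
  - rewrite E1 in H1. lra.
Qed.

Lemma inv_main (y : nat -> R)
  (h1 : y 1%nat = 2)
  (hrec : forall k : nat, (2 <= k)%nat ->
     (2 * INR k - 1)^2 * y k = 4 * (INR k - 1)^2 * y (k - 1)%nat + 2) :
  forall n : nat, ln (INR (S n)) + 2 <= (2 * INR (S n) - 1) * y (S n)
     /\ 2 * INR (S n) * y (S n) <= ln (INR (S n)) + 4.
Proof.
  induction n as [|n [IHl IHu]].
  - rewrite h1. simpl INR. rewrite ln_1. lra.
  - assert (Hr := hrec (S (S n)) ltac:(lia)).
    replace (S (S n) - 1)%nat with (S n) in Hr by lia.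
    rewrite (S_INR (S n)) in *.
    set (a := INR (S n)) in *.
    assert (ha : 1 <= a) by (unfold a; rewrite S_INR; pose proof (pos_INR n); lra).
    destruct (ln_step a ha) as [Dl Du].
    assert (hL' : 0 <= ln a) by (apply ln_nonneg; lra).
    set (L := ln (a+1)) in *. set (L' := ln a) in *.
    set (z := y (S (S n))) in *. set (w := y (S n)) in *.
    replace (a + 1 - 1) with a in Hr by ring.
    assert (Dl' : 1 <= (L - L') * (a+1)).
    { apply (Rmult_le_compat_r (a+1)) in Dl; [|lra].
      replace (1/(a+1)*(a+1)) with 1 in Dl by (field; lra). lra. }
    assert (Du' : (L - L') * a <= 1).
    { apply (Rmult_le_compat_r a) in Du; [|lra].
      replace (1/a*a) with 1 in Du by (field; lra). lra. }
    split.
    +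
      assert (hpos : 0 < 2*a - 1) by lra.
      assert (hw : (L' + 2) <= (2*a-1) * w). lra.
      assert (hd : 0 <= L - L') by (assert (0 < 1/(a+1)) by (apply Rdiv_lt_0_compat; lra); lra).
      assert (k1 : (4*a^2-1)*(L-L') <= 4*a) by nra.
      assert (k2 : 4*a^2*(L'+2) + 2*(2*a-1) >= (4*a^2-1)*(L+2)) by nra.
      assert (k3 : (2*a-1)*(4*a^2*w + 2) >= (2*a-1)*((2*a+1)*(L+2))) by nra.
      assert (k4 : 4*a^2*w + 2 >= (2*a+1)*(L+2)) by nra.
      assert (k5 : (2*a+1)*((2*a+1)*z) >= (2*a+1)*(L+2)) by nra.
      nra.
    + nra.
Qed.

Theorem lemma4p4 (y : nat -> R)
  (h1 : y 1%nat = 2)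
  (hrec : forall k : nat, (2 <= k)%nat ->
     (2 * INR k - 1)^2 * y k = 4 * (INR k - 1)^2 * y (k - 1)%nat + 2) :
  forall k : nat, (1 <= k)%nat ->
    ln (INR k) / (2 * INR k) < y k /\ y k <= (ln (INR k) + 4) / (2 * INR k).
Proof.
  intros k hk. destruct k as [|n]; [lia|].
  destruct (inv_main y h1 hrec n) as [Hl Hu].
  set (a := INR (S n)) in *.
  assert (ha : 1 <= a) by (unfold a; rewrite S_INR; pose proof (pos_INR n); lra).
  assert (hL : 0 <= ln a) by (apply ln_nonneg; lra).
  assert (hy : 0 < y (S n)) by nra.
  split.
  - apply Rmult_lt_reg_r with (2*a); [lra|].
    unfold Rdiv. rewrite Rmult_assoc, Rinv_l by lra. nra.
  - apply Rmult_le_reg_r with (2*a); [lra|].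
    unfold Rdiv. rewrite Rmult_assoc, Rinv_l by lra. nra.
Qed.
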